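(* Let $G=(V,E)$ be a finite simple graph with $V=\{x_1,\dots,x_r\}$, $E=\{e_1,\dots,e_n\}$, and suppose $(x_1,x_2,x_3,x_4)$ is a path of $G$ with edges $e_1=\{x_1,x_2\}$, $e_2=\{x_2,x_3\}$, $e_3=\{x_3,x_4\}$. Let $s=w_1x_1+w_2x_2+w_3x_3+\cdots+w_rx_r\in\operatorname{Im}(\varphi_G)$ be such that $\Delta^G_s$ is not acyclic. Then $w_2=w_3$.
   Context: $\mathbb{N}[V]$ and $\mathbb{N}[E]$ denote the free commutative monoids on $V$ and on $E$, and $\varphi_G:\mathbb{N}[E]\to\mathbb{N}[V]$ is the monoid homomorphism with $\varphi_G(e_j)=x_{j_1}+x_{j_2}$ for $e_j=\{x_{j_1},x_{j_2}\}$. For $F\subseteq[n]$ put $e_F=\sum_{i\in F}e_i$, and for $s\in\mathbb{N}[V]$ let $\Delta^G_s=\{F\subseteq[n]: s-\varphi_G(e_F)\in\operatorname{Im}(\varphi_G)\}$ (difference computed in $\mathbb{Z}^V$), a simplicial complex on $[n]$. It is acyclic if all its reduced homology groups with coefficients in $\mathbb{K}$ vanish. A path is a walk $(y_0,\dots,y_m)$ (consecutive vertices adjacent) whose interior vertices $y_1,\dots,y_{m-1}$ have degree exactly $2$ in $G$. *)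

(* Defs.v *)
From mathcomp Require Import all_boot all_order all_algebra.
Set Implicit Arguments. Unset Strict Implicit. Unset Printing Implicit Defensive.
Import GRing.Theory.
Local Open Scope ring_scope.

Definition simple_graph (r n : nat) (ends : 'I_n -> {set 'I_r}) : Prop :=
  (forall j, #|ends j| = 2%N) /\ injective ends.

Definition deg (r n : nat) (ends : 'I_n -> {set 'I_r}) (x : 'I_r) : nat :=
  #|[set j | x \in ends j]|.

(* phi_G applied to a (multiplicity) vector a in N[E], evaluated at vertex x *)
Definition phiG (r n : nat) (ends : 'I_n -> {set 'I_r}) (a : 'I_n -> nat)
  (x : 'I_r) : nat := (\sum_(j < n) a j * (x \in ends j))%N.

Definition in_imZ (r n : nat) (ends : 'I_n -> {set 'I_r}) (s : 'I_r -> int) : Prop :=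
  exists a : 'I_n -> nat, forall x, s x = (phiG ends a x)%:Z.

(* Delta^G_s : the faces F of [n] such that s - phi_G(e_F) lies in Im(phi_G) *)
Definition DeltaG (r n : nat) (ends : 'I_n -> {set 'I_r}) (s : 'I_r -> nat)
  (F : {set 'I_n}) : Prop :=
  in_imZ ends (fun x => (s x)%:Z - (#|[set j in F | x \in ends j]|)%:Z).

(* Simplicial chains with coefficients in K on the full simplex on 'I_n:
   a chain is a K-valued function on subsets (faces) of 'I_n. *)
Definition chain (K : fieldType) (n : nat) := {ffun {set 'I_n} -> K}.

(* Augmented simplicial boundary: d[F] = sum_{i in F} (-1)^(pos of i in F) [F \ i],
   with vertices ordered by their index; d[{i}] = [emptyset]. *)
Definition boundary (K : fieldType) (n : nat) (c : chain K n) : chain K n :=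
  [ffun G : {set 'I_n} =>
     \sum_(i : 'I_n | i \notin G) (-1) ^+ #|[set j in G | (j < i)%N]| * c (i |: G)].

(* c is a chain of the complex D supported in faces with k elements
   (i.e. of dimension k-1) *)
Definition supported (K : fieldType) (n : nat) (D : {set 'I_n} -> Prop)
  (k : nat) (c : chain K n) : Prop :=
  forall F, c F != 0 -> D F /\ #|F| = k.

(* All reduced homology groups of D with coefficients in K vanish:
   in every degree, every cycle is a boundary (augmented chain complex,
   including the degree -1 term spanned by the empty face). *)
Definition acyclic (K : fieldType) (n : nat) (D : {set 'I_n} -> Prop) : Prop :=
  forall (k : nat) (c : chain K n),
    supported D k c -> boundary c = 0 ->
    exists d : chain K n, supported D k.+1 d /\ boundary d = c.

(* Main.v *)
Require Import Defs.
From mathcomp Require Import all_boot all_order all_algebra.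
From mathcomp Require Import zify ring.
Set Implicit Arguments. Unset Strict Implicit. Unset Printing Implicit Defensive.
Import GRing.Theory.
Local Open Scope ring_scope.

Definition Nc (n : nat) (G : {set 'I_n}) (i : 'I_n) : nat := #|[set j in G | (j < i)%N]|.

Lemma NcU1 n (x : 'I_n) (G : {set 'I_n}) (i : 'I_n) : x \notin G -> Nc (x |: G) i = ((x < i)%N + Nc G i)%N.
Proof.
move=> xG; rewrite /Nc (cardsD1 x) !inE eqxx /=; congr (_ + _)%N.
apply: eq_card => j; rewrite !inE; case: eqP => [->|//]; by rewrite (negbTE xG).
Qed.

Definition hop (K : fieldType) n (v : 'I_n) (c : chain K n) : chain K n :=
  [ffun G : {set 'I_n} => if v \in G then (-1) ^+ Nc (G :\ v) v * c (G :\ v) else 0].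

Lemma homotopy (K : fieldType) n (v : 'I_n) (c : chain K n) (G : {set 'I_n}) :
  boundary (hop v c) G + hop v (boundary c) G = c G.
Proof.
rewrite /boundary !ffunE.
case: (boolP (v \in G)) => vG; last first.
  rewrite addr0 (bigD1 v) //= big1 ?addr0.
    by rewrite /hop ffunE setU11 setU1K // signrMK.
  move=> i /andP [iG iv]; rewrite /hop ffunE !inE (negbTE vG) orbF eq_sym (negbTE iv).
  by rewrite mulr0.
set G' := G :\ v.
have vG' : v \notin G' by rewrite !inE eqxx.
have GE : G = v |: G' by rewrite setD1K.
rewrite (bigD1 v vG') /= setD1K // mulrDr signrMK addrCA.
rewrite -[RHS]addr0; congr (_ + _).
rewrite [X in _ * X](eq_bigl (fun i => i \notin G)); last first.
  move=> i; rewrite /G' !inE; case: (eqVneq i v) => [->|_] /=; rewrite ?vG ?andbT //.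
rewrite big_distrr /= -big_split /= big1 //.
move=> i iG.
have iv : i != v by apply: contraNneq iG => ->.
have iG' : i \notin G' by rewrite !inE negb_and iG orbT.
rewrite /hop ffunE in_setU1 vG orbT.
have -> : (i |: G) :\ v = i |: G'.
  apply/setP => j; rewrite !inE; case: (eqVneq j v) => [->|_] /=; last by [].
  by rewrite eq_sym (negbTE iv).
have NG : Nc G i = ((v < i)%N + Nc G' i)%N by rewrite {1}GE NcU1.
rewrite -/(Nc G i) -/(Nc G' i) NG NcU1 // !exprD.
have : (i : nat) != v by rewrite (inj_eq val_inj).
case: ltngtP => [H|H|H] _ /=.
- ring.
- ring.
- by move/val_inj: H iv => ->; rewrite eqxx.
Qed.

Lemma cone_acyclic (K : fieldType) n (D : {set 'I_n} -> Prop) (v : 'I_n) :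
  (forall F, D F -> D (v |: F)) -> acyclic K D.
Proof.
move=> Dc k c Hs Hb; exists (hop v c); split.
- move=> G; rewrite /hop ffunE; case: ifP => vG; last by rewrite eqxx.
  move=> Hne.
  have cne : c (G :\ v) != 0 by apply: contraNneq Hne => ->; rewrite mulr0.
  have [DG cG] := Hs _ cne.
  split; first by rewrite -(setD1K vG); apply: Dc.
  by rewrite (cardsD1 v) vG cG.
- apply/ffunP => G; have := homotopy v c G.
  by rewrite Hb /hop !ffunE mulr0 if_same addr0.
Qed.
Lemma phiG_two r n (ends : 'I_n -> {set 'I_r}) (a : 'I_n -> nat) (x : 'I_r) p q :
  p != q -> [set j | x \in ends j] = [set p; q] -> phiG ends a x = (a p + a q)%N.
Proof.
move=> pq E.
have Ex j : (x \in ends j) = (j \in [set p; q]) by rewrite -E inE.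
rewrite /phiG (bigD1 p) //= (bigD1 q) /=; last by rewrite eq_sym.
rewrite big1 ?addn0 ?Ex ?in_set2 ?eqxx ?orbT ?muln1 //.
move=> j /andP [jp jq]; by rewrite Ex in_set2 (negbTE jp) (negbTE jq) muln0.
Qed.

Lemma card_phi r n (ends : 'I_n -> {set 'I_r}) (F : {set 'I_n}) (x : 'I_r) :
  #|[set j in F | x \in ends j]| = phiG ends (fun j => nat_of_bool (j \in F)) x.
Proof.
rewrite -sum1_card /phiG big_mkcond /=; apply: eq_bigr => j _.
by rewrite !inE; case: (j \in F); case: (x \in ends j).
Qed.

Lemma cone_step r n (ends : 'I_n -> {set 'I_r}) (w : 'I_r -> nat) y z (p q t : 'I_n) :
  p != q -> q != t ->
  [set j | y \in ends j] = [set p; q] -> [set j | z \in ends j] = [set q; t] ->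
  (w z < w y)%N ->
  forall F, DeltaG ends w F -> DeltaG ends w (p |: F).
Proof.
move=> pq qt Ey Ez wzy F [a Ha].
case: (boolP (p \in F)) => pF; first by (have -> : p |: F = F by apply/setUidPr; rewrite sub1set); exists a.
have Hy := Ha y; have Hz := Ha z.
rewrite card_phi (phiG_two _ pq Ey) (phiG_two _ pq Ey) in Hy.
rewrite card_phi (phiG_two _ qt Ez) (phiG_two _ qt Ez) in Hz.
rewrite (negbTE pF) in Hy.
have ap : (0 < a p)%N.
  move: Hy Hz => /=; move: (nat_of_bool (q \in F)) (nat_of_bool (t \in F)) => b1 b2 Hy Hz. clear -Hy Hz wzy; lia.
exists (fun j => if j == p then (a p).-1 else a j) => x.
have := Ha x; rewrite !card_phi /phiG (bigD1 p) //= (bigD1 p (P := predT)) //=.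
rewrite (bigD1 p (P := predT)) //= (bigD1 p (P := predT)) //= !eqxx setU11 (negbTE pF).
have -> : (\sum_(i < n | i != p) (i \in p |: F) * (x \in ends i))%N =
          (\sum_(i < n | i != p) (i \in F) * (x \in ends i))%N.
  by apply: eq_bigr => i ip; rewrite in_setU1 (negbTE ip).
have -> : (\sum_(i < n | i != p) (if i == p then (a p).-1 else a i) * (x \in ends i))%N =
          (\sum_(i < n | i != p) a i * (x \in ends i))%N.
  by apply: eq_bigr => i ip; rewrite (negbTE ip).
move: (\sum_(i < n | i != p) (i \in F) * (x \in ends i))%N (\sum_(i < n | i != p) a i * (x \in ends i))%N => S T.
case: (x \in ends p) => /=; rewrite ?muln1 ?muln0 ?mul0n ?mul1n ?add0n; lia.
Qed.

Theorem lemma3p7 (K : fieldType) (r n : nat) (ends : 'I_n -> {set 'I_r})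
  (x1 x2 x3 x4 : 'I_r) (e1 e2 e3 : 'I_n) (w : 'I_r -> nat) :
  simple_graph ends ->
  uniq [:: x1; x2; x3; x4] ->
  ends e1 = [set x1; x2] -> ends e2 = [set x2; x3] -> ends e3 = [set x3; x4] ->
  deg ends x2 = 2%N -> deg ends x3 = 2%N ->
  in_imZ ends (fun x => (w x)%:Z) ->
  ~ acyclic K (DeltaG ends w) ->
  w x2 = w x3.
Proof.
move=> _ U E1 E2 E3 d2 d3 _ Hna.
move: U => /=; rewrite !inE !negb_or => /and4P [/and3P [n12 n13 n14] /andP [n23 n24] n34 _].
have e12 : e1 != e2.
  apply/eqP => h; move: E2; rewrite -h E1 => /setP /(_ x1); rewrite !inE eqxx /=.
  by rewrite (negbTE n12) (negbTE n13).
have e23 : e2 != e3.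
  apply/eqP => h; move: E3; rewrite -h E2 => /setP /(_ x2); rewrite !inE eqxx /=.
  by rewrite (negbTE n23) (negbTE n24).
have S2 : [set j | x2 \in ends j] = [set e1; e2].
  apply/esym/eqP; rewrite eqEcard cards2 e12 -[#|_|]/(deg ends x2) d2 andbT.
  apply/subsetP => j; rewrite !inE => /orP [/eqP->|/eqP->]; by rewrite ?E1 ?E2 !inE eqxx ?orbT.
have S3 : [set j | x3 \in ends j] = [set e2; e3].
  apply/esym/eqP; rewrite eqEcard cards2 e23 -[#|_|]/(deg ends x3) d3 andbT.
  apply/subsetP => j; rewrite !inE => /orP [/eqP->|/eqP->]; by rewrite ?E2 ?E3 !inE eqxx ?orbT.
case: (ltngtP (w x2) (w x3)) => // H; exfalso; apply: Hna.
- apply: (cone_acyclic (v := e3)); apply: (cone_step (y := x3) (z := x2) (q := e2) (t := e1)) => //.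
  + by rewrite eq_sym.
  + by rewrite eq_sym.
  + by rewrite S3 setUC.
  + by rewrite S2 setUC.
- apply: (cone_acyclic (v := e1)); exact: (cone_step (y := x2) (z := x3) (q := e2) (t := e3)).
Qed.
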